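(* For all $a,b>0$ and $0\le v\le 1$, with $\mu:=\min\{1-v,v\}$, $$G(a,b)\le Hz_v(a,b)\le \left\{1+\frac{\mu^2}{2}\left(\log a-\log b\right)^2\right\}Hz_v(a,b)\le A(a,b).$$
   Context: For $a,b>0$: $A(a,b):=\frac{a+b}{2}$, $G(a,b):=\sqrt{ab}$, and for $0\le v\le 1$ the Heinz mean is $Hz_v(a,b):=\frac{a^{1-v}b^v+a^{v}b^{1-v}}{2}$. *)

(* Defs.v *)
From Stdlib Require Import Reals.
Open Scope R_scope.

Definition AM (a b : R) : R := (a + b) / 2.
Definition GM (a b : R) : R := sqrt (a * b).
Definition Heinz (v a b : R) : R :=
  (Rpower a (1 - v) * Rpower b v + Rpower a v * Rpower b (1 - v)) / 2.

(* Main.v *)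
Require Import Defs.
From Stdlib Require Import Reals Lra.
Open Scope R_scope.

Lemma sinh_ge y : 0 <= y -> y <= sinh y.
Proof.
  intro Hy.
  assert (Hd : derivable (sinh - id)%F) by (apply derivable_minus; [apply derivable_sinh | apply derivable_id]).
  assert (Hinc := nonneg_derivative_1 _ Hd).
  assert (H : increasing (sinh - id)%F).
  { apply Hinc. intro x. rewrite (pr_nu _ x _ (derivable_pt_minus _ _ x (derivable_pt_sinh x) (derivable_pt_id x))).
    rewrite derive_pt_minus, derive_pt_sinh, derive_pt_id.
    unfold cosh. assert (H1 := exp_ineq1_le x). assert (H2 := exp_ineq1_le (-x)). lra. }
  specialize (H 0 y Hy). unfold minus_fct, id in H. rewrite sinh_0 in H. lra.
Qed.

Lemma cosh_ge d : 2 + d ^ 2 <= exp d + exp (- d).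
Proof.
  assert (E : exp d + exp (-d) - 2 = (2 * sinh (d/2)) ^ 2).
  { unfold sinh. replace d with (d/2 + d/2) at 1 by field.
    replace (-d) with (-(d/2) + -(d/2)) by field.
    rewrite !exp_plus. assert (H := exp_pos (d/2)).
    replace (exp (- (d/2))) with (/ exp (d/2)) by (rewrite exp_Ropp; reflexivity).
    field. lra. }
  destruct (Rle_dec 0 d) as [Hd|Hd].
  - assert (H := sinh_ge (d/2) ltac:(lra)). nra.
  - assert (H := sinh_ge (-(d/2)) ltac:(lra)).
    assert (sinh (-(d/2)) = - sinh (d/2)).
    { unfold sinh. rewrite Ropp_involutive. field. }
    nra.
Qed.

Lemma exp_le_mono x y : x <= y -> exp x <= exp y.
Proof. intro H. destruct (Req_dec x y) as [->|Hn]; [lra|]. left. apply exp_increasing. lra. Qed.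

Lemma key mu t : 0 <= mu -> mu <= 1/2 ->
  (1 + mu ^ 2 / 2 * t ^ 2) * (exp ((1/2 - mu) * t) + exp (- ((1/2 - mu) * t)))
  <= exp (t / 2) + exp (- (t / 2)).
Proof.
  intros H0 H1.
  set (w := (1/2 - mu) * t). set (d := mu * t).
  assert (Ht : t / 2 = w + d) by (unfold w, d; field).
  rewrite Ht.
  replace (- (w + d)) with (-w + -d) by ring.
  rewrite !exp_plus.
  assert (Hc := cosh_ge d).
  assert (Hs : 0 <= (exp w - exp (-w)) * (exp d - exp (-d))).
  { destruct (Rle_dec 0 t).
    - assert (exp (-w) <= exp w) by (apply exp_le_mono; unfold w; nra).
      assert (exp (-d) <= exp d) by (apply exp_le_mono; unfold d; nra).
      nra.
    - assert (exp w <= exp (-w)) by (apply exp_le_mono; unfold w; nra).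
      assert (exp d <= exp (-d)) by (apply exp_le_mono; unfold d; nra).
      nra. }
  assert (Hd2 : mu ^ 2 / 2 * t ^ 2 = d ^ 2 / 2) by (unfold d; field).
  rewrite Hd2.
  assert (0 < exp w) by apply exp_pos. assert (0 < exp (-w)) by apply exp_pos.
  nra.
Qed.

Theorem corollary2p4 (a b v : R) (ha : 0 < a) (hb : 0 < b)
  (hv0 : 0 <= v) (hv1 : v <= 1) :
  let mu := Rmin (1 - v) v in
  GM a b <= Heinz v a b /\
  Heinz v a b <= (1 + mu ^ 2 / 2 * (ln a - ln b) ^ 2) * Heinz v a b /\
  (1 + mu ^ 2 / 2 * (ln a - ln b) ^ 2) * Heinz v a b <= AM a b.
Proof.
  intro mu.
  set (x := ln a). set (y := ln b).
  set (m := (x + y) / 2). set (t := x - y). set (w := (1/2 - v) * t).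
  assert (Ea : a = exp (m + t / 2)) by (replace (m + t/2) with x by (unfold m, t; field); unfold x; rewrite exp_ln; auto).
  assert (Eb : b = exp (m - t / 2)) by (replace (m - t/2) with y by (unfold m, t; field); unfold y; rewrite exp_ln; auto).
  assert (EH : Heinz v a b = exp m * (exp w + exp (- w)) / 2).
  { replace (exp m * (exp w + exp (- w)) / 2) with ((exp (m + w) + exp (m + - w)) / 2) by (rewrite !exp_plus; field).
    unfold Heinz, Rpower. fold x y. rewrite <- !exp_plus.
    replace (m + w) with ((1 - v) * x + v * y) by (unfold m, w, t; field).
    replace (m + - w) with (v * x + (1 - v) * y) by (unfold m, w, t; field).
    ring_simplify; f_equal; f_equal; f_equal; ring. }
  assert (EA : AM a b = exp m * (exp (t/2) + exp (- (t/2))) / 2).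
  { unfold AM. rewrite Ea, Eb at 1. unfold Rminus. rewrite !exp_plus. field. }
  assert (EG : GM a b = exp m).
  { unfold GM. rewrite Ea, Eb, <- exp_plus.
    replace (m + t / 2 + (m - t / 2)) with (m + m) by ring.
    rewrite exp_plus. apply sqrt_square. left; apply exp_pos. }
  fold t.
  assert (Hm := exp_pos m).
  assert (Hw1 := exp_ineq1_le w). assert (Hw2 := exp_ineq1_le (-w)).
  assert (Hf : 0 <= mu ^ 2 / 2 * t ^ 2) by (apply Rmult_le_pos; [apply Rmult_le_pos; [apply pow2_ge_0|lra]|apply pow2_ge_0]).
  rewrite EH, EA, EG.
  split; [|split].
  - assert (0 <= exp m * ((exp w + exp (- w)) - 2)) by (apply Rmult_le_pos; lra). nra.
  - assert (0 <= exp m * (exp w + exp (- w)) / 2 * (mu ^ 2 / 2 * t ^ 2)) by (apply Rmult_le_pos; [apply Rmult_le_pos; [apply Rmult_le_pos; lra|lra]|lra]). nra.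
  - assert (K : (1 + mu ^ 2 / 2 * t ^ 2) * (exp w + exp (- w)) <= exp (t / 2) + exp (- (t / 2))).
    { unfold mu, Rmin. destruct (Rle_dec (1 - v) v).
      - assert (Hk := key (1 - v) t ltac:(lra) ltac:(lra)).
        replace (exp w + exp (- w)) with (exp ((1/2 - (1 - v)) * t) + exp (- ((1/2 - (1 - v)) * t))).
        + exact Hk.
        + unfold w. replace ((1/2 - (1 - v)) * t) with (- ((1/2 - v) * t)) by (unfold t; field).
          rewrite Ropp_involutive. ring.
      - apply key; lra. }
    replace ((1 + mu ^ 2 / 2 * t ^ 2) * (exp m * (exp w + exp (- w)) / 2))
      with (exp m / 2 * ((1 + mu ^ 2 / 2 * t ^ 2) * (exp w + exp (- w)))) by field.
    replace (exp m * (exp (t / 2) + exp (- (t / 2))) / 2)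
      with (exp m / 2 * (exp (t / 2) + exp (- (t / 2)))) by field.
    apply Rmult_le_compat_l; [lra | exact K].
Qed.
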